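(* Let $\mathcal{X}$ be a feature space, $p(\boldsymbol{x},y)$ a joint density on $\mathcal{X}\times\{+1,-1\}$ with class priors $\pi_+=p(y=+1)$, $\pi_-=1-\pi_+$ and class-conditional densities $p_+(\boldsymbol{x})=p(\boldsymbol{x}\mid y=+1)$, $p_-(\boldsymbol{x})=p(\boldsymbol{x}\mid y=-1)$. Let pairs $(\boldsymbol{x}_i,\boldsymbol{x}_i')$, $i=1,\dots,n$, be drawn i.i.d. from the density $$\widetilde{p}(\boldsymbol{x},\boldsymbol{x}')=\frac{\pi_+^2p_+(\boldsymbol{x})p_+(\boldsymbol{x}')+\pi_-^2p_-(\boldsymbol{x})p_-(\boldsymbol{x}')+\pi_+\pi_-p_+(\boldsymbol{x})p_-(\boldsymbol{x}')}{\pi_+^2+\pi_-^2+\pi_+\pi_-},$$ and let $\widetilde{\mathcal{D}}_+=\{\boldsymbol{x}_i\}_{i=1}^n$ and $\widetilde{\mathcal{D}}_-=\{\boldsymbol{x}_i'\}_{i=1}^n$. Then the points of $\widetilde{\mathcal{D}}_+$ are independently drawn from $$\widetilde{p}_+(\boldsymbol{x})=\frac{\pi_+}{\pi_-^2+\pi_+}p_+(\boldsymbol{x})+\frac{\pi_-^2}{\pi_-^2+\pi_+}p_-(\boldsymbol{x}),$$ and the points of $\widetilde{\mathcal{D}}_-$ are independently drawn from $$\widetilde{p}_-(\boldsymbol{x}')=\frac{\pi_+^2}{\pi_+^2+\pi_-}p_+(\boldsymbol{x}')+\frac{\pi_-}{\pi_+^2+\pi_-}p_-(\boldsymbol{x}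').$$
   Context: $\widetilde{p}(\boldsymbol{x},\boldsymbol{x}')$ is the density of pairwise comparison data: pairs of unlabeled points whose (unobserved) labels $(y,y')$ are conditioned to lie in $\{(+1,+1),(+1,-1),(-1,-1)\}$, where the two labeled points are drawn independently from $p(\boldsymbol{x},y)$. *)

(* Defs.v *)
From HB Require Import structures.
From mathcomp Require Import all_boot all_order all_algebra.
From mathcomp Require Import all_classical all_reals all_analysis.
Set Implicit Arguments. Unset Strict Implicit. Unset Printing Implicit Defensive.
Import Order.TTheory GRing.Theory Num.Theory.
Local Open Scope classical_set_scope.
Local Open Scope ring_scope.

Definition is_density {d} {T : measurableType d} {R : realType}
    (mu : {measure set T -> \bar R}) (f : T -> R) : Prop :=
  [/\ measurable_fun setT f, (forall x, 0 <= f x) &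
      (\int[mu]_x (f x)%:E = 1)%E].

Definition has_density {d} {Omega : measurableType d} {R : realType}
    (P : probability Omega R) {dT} {T : measurableType dT}
    (X : Omega -> T) (nu : set T -> \bar R) (f : T -> R) : Prop :=
  forall A : set T, measurable A ->
    P (X @^-1` A) = (\int[nu]_(z in A) (f z)%:E)%E.

Definition mutually_independent {d} {Omega : measurableType d} {R : realType}
    (P : probability Omega R) {I : finType} {dT} {T : measurableType dT}
    (Y : I -> Omega -> T) : Prop :=
  forall (J : {set I}) (B : I -> set T), (forall i, measurable (B i)) ->
    P (\bigcap_(i in [set` J]) (Y i @^-1` B i)) =
    (\prod_(i in J) P (Y i @^-1` B i))%E.

Definition pcomp_density {T : Type} {R : realType} (pip : R)
    (pp pm : T -> R) (z : T * T) : R :=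
  let pim := 1 - pip in
  (pip ^+ 2 * pp z.1 * pp z.2 + pim ^+ 2 * pm z.1 * pm z.2
     + pip * pim * pp z.1 * pm z.2) / (pip ^+ 2 + pim ^+ 2 + pip * pim).

Definition pcomp_pos {T : Type} {R : realType} (pip : R) (pp pm : T -> R)
    (x : T) : R :=
  let pim := 1 - pip in
  pip / (pim ^+ 2 + pip) * pp x + pim ^+ 2 / (pim ^+ 2 + pip) * pm x.

Definition pcomp_neg {T : Type} {R : realType} (pip : R) (pp pm : T -> R)
    (x : T) : R :=
  let pim := 1 - pip in
  pip ^+ 2 / (pip ^+ 2 + pim) * pp x + pim / (pip ^+ 2 + pim) * pm x.

(* Main.v *)
Require Import Defs.
From HB Require Import structures.
From mathcomp Require Import all_boot all_order all_algebra.
From mathcomp Require Import all_classical all_reals all_analysis.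
From mathcomp Require Import measurable_realfun.
From mathcomp Require Import ring lra.
Import Order.TTheory GRing.Theory Num.Theory.
Local Open Scope classical_set_scope.
Local Open Scope ring_scope.

Section SF.
Context (R : realType) (d : measure_display) (T : measurableType d)
    (mu : {measure set T -> \bar R}) (mu_sf : sigma_finite setT mu).
Definition mu' := (mu : set T -> \bar R).
HB.instance Definition _ := Measure.on mu'.
HB.instance Definition _ := @Measure_isSigmaFinite.Build d T R mu' mu_sf.
Lemma fub1 (f : T * T -> \bar R) : measurable_fun [set: T * T] f ->
  (forall x, 0 <= f x)%E ->
  (\int[mu \x mu]_z f z = \int[mu]_x \int[mu]_y f (x, y))%E.
Proof.
move=> mf f0; have := (@fubini_tonelli1 _ _ _ _ _ mu' mu' f mf f0).
by rewrite /fubini_F => ->.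
Qed.
Lemma fub2 (f : T * T -> \bar R) : measurable_fun [set: T * T] f ->
  (forall x, 0 <= f x)%E ->
  (\int[mu \x mu]_z f z = \int[mu]_y \int[mu]_x f (x, y))%E.
Proof.
move=> mf f0; have := (@fubini_tonelli2 _ _ _ _ _ mu' mu' f mf f0).
by rewrite /fubini_G => ->.
Qed.
End SF.

Lemma indep_comp {d} {Omega : measurableType d} {R : realType}
    (P : probability Omega R) {I : finType} {dT} {T : measurableType dT}
    {dU} {U : measurableType dU} (Y : I -> Omega -> T) (g : T -> U) :
  measurable_fun setT g -> mutually_independent P Y ->
  mutually_independent P (fun i => g \o Y i).
Proof.
move=> mg H J B mB.
have mB' : forall i, measurable (g @^-1` B i).
  by move=> i; rewrite -[g @^-1` _]setTI; exact: mg.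
exact: (H J (fun i => g @^-1` B i) mB').
Qed.

Lemma my_mkcond d (T : measurableType d) (R : realType) (m : set T -> \bar R)
  (D : set T) (f : T -> \bar R) :
  (\int[m]_(x in D) f x = \int[m]_x (f \_ D) x)%E.
Proof. by rewrite /integral patch_setT. Qed.

Lemma marg1 (R : realType) (d : measure_display) (T : measurableType d)
    (mu : {measure set T -> \bar R}) (mu_sf : sigma_finite setT mu)
    (dO : measure_display) (Omega : measurableType dO)
    (P : probability Omega R) (Z : Omega -> T * T)
    (f : T * T -> R) (g : T -> R)
    (mf : measurable_fun setT f) (f0 : forall z, 0 <= f z)
    (hg : forall x, (\int[mu]_y (f (x, y))%:E = (g x)%:E)%E) :
  has_density P Z (mu \x mu)%E f -> has_density P (fun w => (Z w).1) mu g.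
Proof.
move=> hZ A mA.
have mA' : measurable (@fst T T @^-1` A).
  by rewrite -[_ @^-1` A]setTI; exact: measurable_fst.
have -> : (fun w => (Z w).1) @^-1` A = Z @^-1` (fst @^-1` A) by [].
rewrite hZ // my_mkcond fub1 //; last first.
- by move=> z; rewrite /restrict; case: ifP => // _; rewrite lee_fin.
- apply/(measurable_restrictT _ _).1 => //.
  apply: measurable_funS (_ : measurable_fun setT (fun z => (f z)%:E)) => //.
  exact/measurable_EFinP.
rewrite (@my_mkcond _ _ _ mu A); apply: eq_integral => x _.
have [xA|xA] := boolP (x \in A).
  rewrite patchE xA -hg; apply: eq_integral => y _.
  by rewrite patchE ifT.
rewrite patchE (negbTE xA); apply: integral0_eq => y _; rewrite patchE ifF //.
by apply/negbTE; apply: contra xA; rewrite !inE.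
Qed.

Lemma marg2 (R : realType) (d : measure_display) (T : measurableType d)
    (mu : {measure set T -> \bar R}) (mu_sf : sigma_finite setT mu)
    (dO : measure_display) (Omega : measurableType dO)
    (P : probability Omega R) (Z : Omega -> T * T)
    (f : T * T -> R) (g : T -> R)
    (mf : measurable_fun setT f) (f0 : forall z, 0 <= f z)
    (hg : forall y, (\int[mu]_x (f (x, y))%:E = (g y)%:E)%E) :
  has_density P Z (mu \x mu)%E f -> has_density P (fun w => (Z w).2) mu g.
Proof.
move=> hZ A mA.
have mA' : measurable (@snd T T @^-1` A).
  by rewrite -[_ @^-1` A]setTI; exact: measurable_snd.
have -> : (fun w => (Z w).2) @^-1` A = Z @^-1` (snd @^-1` A) by [].
rewrite hZ // my_mkcond fub2 //; last first.
- by move=> z; rewrite /restrict; case: ifP => // _; rewrite lee_fin.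
- apply/(measurable_restrictT _ _).1 => //.
  apply: measurable_funS (_ : measurable_fun setT (fun z => (f z)%:E)) => //.
  exact/measurable_EFinP.
rewrite (@my_mkcond _ _ _ mu A); apply: eq_integral => y _.
have [xA|xA] := boolP (y \in A).
  rewrite patchE xA -hg; apply: eq_integral => x _.
  by rewrite patchE ifT.
rewrite patchE (negbTE xA); apply: integral0_eq => x _; rewrite patchE ifF //.
by apply/negbTE; apply: contra xA; rewrite !inE.
Qed.
Lemma lin_int (R : realType) (d : measure_display) (T : measurableType d)
    (mu : {measure set T -> \bar R}) (pp pm : T -> R)
    (hp : is_density mu pp) (hm : is_density mu pm) (a b : R)
    (ha : 0 <= a) (hb : 0 <= b) (h : T -> R)
    (hh : forall y, h y = a * pp y + b * pm y) :
  (\int[mu]_y (h y)%:E = (a + b)%:E)%E.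
Proof.
case: hp => mp p0 ip; case: hm => mm m0 im.
under eq_integral do rewrite hh EFinD !EFinM.
rewrite ge0_integralD //; last 4 first.
- by move=> y _; rewrite -EFinM lee_fin mulr_ge0.
- by apply: measurable_funeM; exact/measurable_EFinP.
- by move=> y _; rewrite -EFinM lee_fin mulr_ge0.
- by apply: measurable_funeM; exact/measurable_EFinP.
rewrite !ge0_integralZl //; last 4 first.
- by apply/measurable_EFinP.
- by move=> y _; rewrite lee_fin.
- by apply/measurable_EFinP.
- by move=> y _; rewrite lee_fin.
by rewrite ip im !mule1.
Qed.

Theorem theorem2 (R : realType) (d : measure_display) (T : measurableType d)
    (mu : {measure set T -> \bar R}) (mu_sf : sigma_finite setT mu)
    (pip : R) (pp pm : T -> R)
    (pip_ge0 : 0 <= pip) (pip_le1 : pip <= 1)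
    (pp_dens : is_density mu pp) (pm_dens : is_density mu pm)
    (dO : measure_display) (Omega : measurableType dO)
    (P : probability Omega R) (n : nat) (X X' : 'I_n -> Omega -> T)
    (mXX' : forall i, measurable_fun setT (fun w => (X i w, X' i w)))
    (indep : mutually_independent P (fun i w => (X i w, X' i w)))
    (dens : forall i, has_density P (fun w => (X i w, X' i w))
                        (mu \x mu)%E (pcomp_density pip pp pm)) :
  (mutually_independent P X /\
   forall i, has_density P (X i) mu (pcomp_pos pip pp pm)) /\
  (mutually_independent P X' /\
   forall i, has_density P (X' i) mu (pcomp_neg pip pp pm)).
Proof.
have pim0 : 0 <= 1 - pip by lra.
have D0 : 0 < pip ^+ 2 + (1 - pip) ^+ 2 + pip * (1 - pip) by nra.
have DN : pip ^+ 2 + (1 - pip) ^+ 2 + pip * (1 - pip) != 0 by rewrite gt_eqF.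
have DE1 : pip ^+ 2 + (1 - pip) ^+ 2 + pip * (1 - pip) = (1 - pip) ^+ 2 + pip
  by ring.
have DE2 : pip ^+ 2 + (1 - pip) ^+ 2 + pip * (1 - pip) = pip ^+ 2 + (1 - pip)
  by ring.
have pp0 := pp_dens; case: pp0 => mpp pp0 _.
have pm0 := pm_dens; case: pm0 => mpm pm0 _.
have mf : measurable_fun setT (pcomp_density pip pp pm).
  rewrite /pcomp_density /=.
  apply: measurable_funM => //.
  apply: measurable_funD; first apply: measurable_funD.
  - apply: measurable_funM; first apply: measurable_funM => //.
    + by apply: measurableT_comp => //.
    + by apply: measurableT_comp => //.
  - apply: measurable_funM; first apply: measurable_funM => //.
    + by apply: measurableT_comp => //.
    + by apply: measurableT_comp => //.
  - apply: measurable_funM; first apply: measurable_funM => //.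
    + by apply: measurableT_comp => //.
    + by apply: measurableT_comp => //.
have f0 : forall z, 0 <= pcomp_density pip pp pm z.
  move=> z; rewrite /pcomp_density /=; apply: divr_ge0; last exact: ltW.
  by rewrite !addr_ge0 // !mulr_ge0 // exprn_ge0.
pose D := pip ^+ 2 + (1 - pip) ^+ 2 + pip * (1 - pip).
split; split.
- exact: (@indep_comp _ _ _ P _ _ _ _ _ _ (@fst T T) measurable_fst indep).
- move=> i.
  apply: (@marg1 R d T mu mu_sf dO Omega P _ _ _ mf f0 _ (dens i)) => x.
  have -> : pcomp_pos pip pp pm x =
    pip ^+ 2 * pp x / D + ((1 - pip) ^+ 2 * pm x + pip * (1 - pip) * pp x) / D.
    by rewrite /pcomp_pos /D /= DE1; field; rewrite -DE1.
  apply: (@lin_int _ _ _ _ _ _ pp_dens pm_dens _ _ _ _ (fun y => pcomp_density pip pp pm (x, y))).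
  + by apply: divr_ge0; [rewrite mulr_ge0 // exprn_ge0|exact: ltW].
  + by apply: divr_ge0; [rewrite addr_ge0 // !mulr_ge0 // exprn_ge0|exact: ltW].
  + by move=> y; rewrite /pcomp_density /D /=; field.
- exact: (@indep_comp _ _ _ P _ _ _ _ _ _ (@snd T T) measurable_snd indep).
- move=> i.
  apply: (@marg2 R d T mu mu_sf dO Omega P _ _ _ mf f0 _ (dens i)) => y.
  have -> : pcomp_neg pip pp pm y =
    (pip ^+ 2 * pp y + pip * (1 - pip) * pm y) / D + (1 - pip) ^+ 2 * pm y / D.
    by rewrite /pcomp_neg /D /= DE2; field; rewrite -DE2.
  apply: (@lin_int _ _ _ _ _ _ pp_dens pm_dens _ _ _ _ (fun x => pcomp_density pip pp pm (x, y))).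
  + by apply: divr_ge0; [rewrite addr_ge0 // !mulr_ge0 // exprn_ge0|exact: ltW].
  + by apply: divr_ge0; [rewrite mulr_ge0 // exprn_ge0|exact: ltW].
  + by move=> x; rewrite /pcomp_density /D /=; field.
Qed.
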